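(* Let $f_0,f_1,\dots,f_m$ be as in the context. Then (a) $f_i(0)-\inf_zf_i(z)\le 3000\pi^2\bar d\epsilon^2/(mL_f)$ for $i=1,\dots,m$, and $f_0(0)-\inf_xf_0(x)\le3000\pi^2\bar d\epsilon^2/L_f$; (b) $\nabla f_i$ is $L_f$-Lipschitz continuous for $i=0,1,\dots,m$; (c) $f_i$ is $\frac{50\pi\epsilon\sqrt{\bar d}}{\sqrt m}$-Lipschitz continuous for $i=1,\dots,m$, and $f_0$ is $50\pi\epsilon\sqrt{m\bar d}$-Lipschitz continuous.
   Context: Fix $\epsilon\in(0,1)$, $L_f>0$, integers $m_1\ge2$, $m_2\ge1$ with $m_1m_2$ even, $m=3m_1m_2$, an odd integer $\bar d\ge5$, $d=m\bar d$; $[z]_j$ is the $j$-th coordinate. $\Psi(u)=0$ ($u\le0$), $\Psi(u)=1-e^{-u^2}$ ($u>0$); $\Phi(v)=4\arctan v+2\pi$. For $z\in\mathbb R^{\bar d}$: $\varphi(z,1)=-\Psi(1)\Phi([z]_1)$, $\varphi(z,j)=\Psi(-[z]_{j-1})\Phi(-[z]_j)-\Psi([z]_{j-1})\Phi([z]_j)$ ($2\le j\le\bar d$); $h_i(z)=\varphi(z,1)+3\sum_{j=1}^{\lfloor\bar d/2\rfloor}\varphi(z,2j)$ for $1\le i\le m/3$, $h_i(z)=\varphi(z,1)$ for $m/3+1\le i\le 2m/3$, $h_i(z)=\varphi(z,1)+3\sum_{j=1}^{\lfloor\bar d/2\rfloor}\varphi(z,2j+1)$ for $2m/3+1\le i\le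 m$. $f_i(z)=\frac{300\pi\epsilon^2}{mL_f}h_i(\frac{\sqrt mL_fz}{150\pi\epsilon})$ for $z\in\mathbb R^{\bar d}$, and $f_0(x)=\sum_{i=1}^mf_i(x_i)$ for $x=(x_1^\top,\dots,x_m^\top)^\top\in\mathbb R^d$, $x_i\in\mathbb R^{\bar d}$. *)

(* Defs.v *)
(* concrete reals R.  Vectors of R^n are represented as
   functions nat -> R of which only the coordinates 0..n-1 are used
   (0-based; the paper's [z]_j is z (j-1)). *)
From Stdlib Require Import Reals Lra Lia.
Open Scope R_scope.

Fixpoint rsum (n : nat) (u : nat -> R) : R :=
  match n with O => 0 | S k => rsum k u + u k end.

Definition vadd (x y : nat -> R) : nat -> R := fun k => x k + y k.
Definition vsub (x y : nat -> R) : nat -> R := fun k => x k - y k.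
Definition vscal (a : R) (x : nat -> R) : nat -> R := fun k => a * x k.
Definition vzero : nat -> R := fun _ => 0.

Definition dot (n : nat) (x y : nat -> R) : R := rsum n (fun k => x k * y k).
Definition enorm (n : nat) (x : nat -> R) : R := sqrt (dot n x x).

Definition lipschitz (n : nat) (L : R) (f : (nat -> R) -> R) : Prop :=
  forall x y, Rabs (f x - f y) <= L * enorm n (vsub x y).

Definition has_gradient (n : nat) (f : (nat -> R) -> R) (g : nat -> R) (x : nat -> R) : Prop :=
  forall e, 0 < e -> exists delta, 0 < delta /\
    forall h, enorm n h < delta ->
      Rabs (f (vadd x h) - f x - dot n g h) <= e * enorm n h.

Definition grad_lipschitz (n : nat) (L : R) (f : (nat -> R) -> R) : Prop :=
  exists grad : (nat -> R) -> (nat -> R),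
    (forall x, has_gradient n f (grad x) x) /\
    (forall x y, enorm n (vsub (grad x) (grad y)) <= L * enorm n (vsub x y)).

Definition Psi (u : R) : R := if Rle_dec u 0 then 0 else 1 - exp (- u ^ 2).
Definition Phi (v : R) : R := 4 * atan v + 2 * PI.

(* varphi(z, j) for 1 <= j <= dbar (paper's 1-based j) *)
Definition varphi (z : nat -> R) (j : nat) : R :=
  match j with
  | O => 0 (* unused *)
  | S O => - Psi 1 * Phi (z 0%nat)
  | S (S k) => Psi (- z k) * Phi (- z (S k)) - Psi (z k) * Phi (z (S k))
  end.

(* h_i, i 1-based, 1 <= i <= m ; floor(dbar/2) = Nat.div2 dbar *)
Definition h (m dbar i : nat) (z : nat -> R) : R :=
  if (i <=? m / 3)%nat then
    varphi z 1 + 3 * rsum (Nat.div2 dbar) (fun k => varphi z (2 * (S k)))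
  else if (i <=? 2 * m / 3)%nat then varphi z 1
  else varphi z 1 + 3 * rsum (Nat.div2 dbar) (fun k => varphi z (2 * (S k) + 1)).

(* f_i on R^dbar, i 1-based *)
Definition fi (eps Lf : R) (m dbar i : nat) (z : nat -> R) : R :=
  300 * PI * eps ^ 2 / (INR m * Lf) *
  h m dbar i (vscal (sqrt (INR m) * Lf / (150 * PI * eps)) z).

(* the i-th block x_i in R^dbar of x in R^(m*dbar), i 1-based *)
Definition block (dbar i : nat) (x : nat -> R) : nat -> R :=
  fun j => x ((i - 1) * dbar + j)%nat.

Definition f0 (eps Lf : R) (m dbar : nat) (x : nat -> R) : R :=
  rsum m (fun k => fi eps Lf m dbar (S k) (block dbar (S k) x)).

(* Main.v *)
Require Import Defs.
From Stdlib Require Import Reals Lra Lia FunctionalExtensionality.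
From Coquelicot Require Import Coquelicot.
Open Scope R_scope.

Lemma rsum_ext n u v : (forall k, (k < n)%nat -> u k = v k) -> rsum n u = rsum n v.
Proof. induction n; simpl; intros H; auto. rewrite IHn by (intros; apply H; lia). rewrite H by lia; auto. Qed.

Lemma rsum_plus n u v : rsum n (fun k => u k + v k) = rsum n u + rsum n v.
Proof. induction n; simpl; [lra|rewrite IHn; lra]. Qed.
Lemma rsum_minus n u v : rsum n (fun k => u k - v k) = rsum n u - rsum n v.
Proof. induction n; simpl; [lra|rewrite IHn; lra]. Qed.
Lemma rsum_scal n a u : rsum n (fun k => a * u k) = a * rsum n u.
Proof. induction n; simpl; [lra|rewrite IHn; lra]. Qed.
Lemma rsum_le n u v : (forall k, (k < n)%nat -> u k <= v k) -> rsum n u <= rsum n v.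
Proof. induction n; simpl; intros H; [lra|]. assert (u n <= v n) by (apply H; lia).
 assert (rsum n u <= rsum n v) by (apply IHn; intros; apply H; lia). lra. Qed.
Lemma rsum_nonneg n u : (forall k, (k < n)%nat -> 0 <= u k) -> 0 <= rsum n u.
Proof. intros H. replace 0 with (rsum n (fun _ => 0)). apply rsum_le; auto.
 induction n; simpl; auto. rewrite IHn; [lra|intros; apply H; lia]. Qed.
Lemma rsum_const0 n : rsum n (fun _ => 0) = 0.
Proof. induction n; simpl; auto; rewrite IHn; lra. Qed.
Lemma rsum_abs n u : Rabs (rsum n u) <= rsum n (fun k => Rabs (u k)).
Proof. induction n; simpl. rewrite Rabs_R0; lra.
 eapply Rle_trans. apply Rabs_triang. lra. Qed.
Lemma rsum_add a b u : rsum (a + b) u = rsum a u + rsum b (fun k => u (a + k)%nat).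
Proof. induction b; simpl. rewrite Nat.add_0_r; lra.
 rewrite Nat.add_succ_r; simpl. rewrite IHb; lra. Qed.
Lemma rsum_pairs D u : rsum (2 * D) u = rsum D (fun k => u (2 * k)%nat + u (2 * k + 1)%nat).
Proof. induction D. simpl; auto.
 replace (2 * S D)%nat with (S (S (2 * D))) by lia. cbn [rsum]. rewrite IHD.
 replace (2 * D + 1)%nat with (S (2*D)) by lia. lra. Qed.
Lemma rsum_tail0 a n u : (a <= n)%nat -> (forall k, (a <= k < n)%nat -> u k = 0) -> rsum n u = rsum a u.
Proof. induction n; intros Ha H. replace a with 0%nat by lia; auto.
 destruct (Nat.eq_dec a (S n)). subst; auto.
 simpl. rewrite IHn by (try lia; intros; apply H; lia). rewrite H by lia. lra. Qed.
Lemma rsum_mul m n u : rsum (m * n) u = rsum m (fun k => rsum n (fun j => u (k * n + j)%nat)).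
Proof. induction m; simpl; auto. rewrite Nat.add_comm, rsum_add, IHm. auto. Qed.
Lemma rsum_single n k u : (k < n)%nat -> (forall j, (j < n)%nat -> 0 <= u j) -> u k <= rsum n u.
Proof. induction n; intros Hk H; [lia|]. simpl.
 assert (0 <= rsum n u) by (apply rsum_nonneg; intros; apply H; lia).
 destruct (Nat.eq_dec k n). subst; lra.
 assert (u k <= rsum n u) by (apply IHn; [lia|intros; apply H; lia]).
 assert (0 <= u n) by (apply H; lia). lra. Qed.
Lemma rsum_delta0 n c h : (1 <= n)%nat -> rsum n (fun j => (if (j =? 0)%nat then c else 0) * h j) = c * h 0%nat.
Proof. induction n; intros Hn; [lia|]. destruct n. simpl. lra.
 simpl rsum. simpl in IHn. rewrite IHn by lia. simpl. lra. Qed.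

Lemma cs_ones n v : (rsum n (fun k => Rabs (v k)))^2 <= INR n * rsum n (fun k => v k ^ 2).
Proof. induction n. simpl; lra.
 rewrite S_INR. cbn [rsum].
 set (Ss := rsum n (fun k => Rabs (v k))) in *. set (Q := rsum n (fun k => v k ^ 2)) in *.
 assert (0 <= Ss) by (apply rsum_nonneg; intros; apply Rabs_pos).
 assert (0 <= Q) by (apply rsum_nonneg; intros; apply pow2_ge_0).
 assert (Hv: Rabs (v n) ^ 2 = v n ^ 2) by (unfold Rabs; destruct Rcase_abs; ring). 
 assert (0 <= Rabs (v n)) by apply Rabs_pos.
 assert (0 <= INR n) by apply pos_INR.
 assert (2 * Ss * Rabs (v n) <= Q + INR n * v n ^ 2).
 { destruct n. unfold Ss; simpl. lra.
   assert (0 < INR (S n)) by (apply lt_0_INR; lia).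
   set (N := INR (S n)) in *. set (a := Rabs (v (S n))) in *.
   assert (Ss ^ 2 <= N * Q) by exact IHn.
   rewrite <- Hv.
   assert (0 <= (Ss - N * a)^2) by apply pow2_ge_0.
   (* 2 S a N <= S^2 + N^2 a^2 <= N Q + N^2 a^2 *)
   assert (2 * Ss * a * N <= N * Q + N * N * a^2) by nra.
   apply Rmult_le_reg_r with N; auto. nra. }
 rewrite <- Hv in *. nra. Qed.

Lemma dot_sq_ge0 n v : 0 <= dot n v v.
Proof. apply rsum_nonneg; intros; nra. Qed.
Lemma coord_sq n v k : (k < n)%nat -> v k * v k <= dot n v v.
Proof. intros. unfold dot. apply (rsum_single n k (fun k => v k * v k)); auto. intros; nra. Qed.
Lemma coord_le_norm n v k : (k < n)%nat -> Rabs (v k) <= enorm n v.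
Proof. intros. unfold enorm. rewrite <- sqrt_Rsqr_abs. apply sqrt_le_1_alt. unfold Rsqr. apply coord_sq; auto. Qed.
Lemma enorm_sq n v : enorm n v * enorm n v = dot n v v.
Proof. unfold enorm. apply sqrt_sqrt, dot_sq_ge0. Qed.
Lemma enorm_ge0 n v : 0 <= enorm n v.
Proof. apply sqrt_pos. Qed.
Lemma enorm_le_of_sq n v w L : 0 <= L -> dot n v v <= L^2 * dot n w w -> enorm n v <= L * enorm n w.
Proof. intros HL H. unfold enorm. rewrite <- (sqrt_pow2 L) by auto. rewrite <- sqrt_mult_alt by nra.
 apply sqrt_le_1_alt; auto. Qed.
Lemma sum_abs_le n v : rsum n (fun k => Rabs (v k)) <= sqrt (INR n) * enorm n v.
Proof. unfold enorm. rewrite <- sqrt_mult_alt by apply pos_INR.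
 rewrite <- (sqrt_pow2 (rsum n (fun k => Rabs (v k)))) by (apply rsum_nonneg; intros; apply Rabs_pos).
 apply sqrt_le_1_alt. eapply Rle_trans. apply cs_ones. unfold dot.
 right. f_equal. apply rsum_ext. intros; ring. Qed.

Lemma lip_deriv f f' K : (forall x, derivable_pt_lim f x (f' x)) -> (forall x, Rabs (f' x) <= K) ->
  forall a b, Rabs (f b - f a) <= K * Rabs (b - a).
Proof. intros Hd HK a b.
 destruct (Rtotal_order a b) as [H|[H|H]].
 - destruct (MVT_cor2 f f' a b H) as [c [Hc _]]. intros; apply Hd.
   rewrite Hc, Rabs_mult. apply Rmult_le_compat_r; auto. apply Rabs_pos.
 - subst. replace (f b - f b) with 0 by ring. replace (b - b) with 0 by ring. rewrite Rabs_R0.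
   assert (0 <= K) by (eapply Rle_trans; [apply Rabs_pos| apply (HK b)]). lra.
 - destruct (MVT_cor2 f f' b a H) as [c [Hc _]]. intros; apply Hd.
   rewrite <- Rabs_Ropp. replace (- (f b - f a)) with (f a - f b) by ring. rewrite Hc, Rabs_mult.
   rewrite <- (Rabs_Ropp (b - a)). replace (- (b - a)) with (a - b) by ring.
   apply Rmult_le_compat_r; auto. apply Rabs_pos.
Qed.

Lemma qb_deriv f f' K : (forall x, derivable_pt_lim f x (f' x)) -> (forall x y, Rabs (f' x - f' y) <= K * Rabs (x - y)) ->
  forall a s, Rabs (f (a + s) - f a - f' a * s) <= K * s ^ 2.
Proof. intros Hd HK a s.
 assert (HK0 : 0 <= K).
 { specialize (HK 1 0). replace (1 - 0) with 1 in HK by ring. rewrite Rabs_R1 in HK.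
   pose proof (Rabs_pos (f' 1 - f' 0)). lra. }
 destruct (Rtotal_order s 0) as [H|[H|H]].
 - destruct (MVT_cor2 f f' (a + s) a) as [c [Hc Hc2]]. lra. intros; apply Hd.
   replace (f (a + s) - f a - f' a * s) with (- (f a - f (a + s)) - f' a * s) by ring.
   rewrite Hc. replace (- (f' c * (a - (a + s))) - f' a * s) with ((f' c - f' a) * s) by ring.
   rewrite Rabs_mult. specialize (HK c a).
   assert (Rabs (c - a) <= Rabs s) by (rewrite !Rabs_left by lra; lra).
   assert (Rabs s ^ 2 = s ^ 2) by (unfold Rabs; destruct Rcase_abs; ring).
   pose proof (Rabs_pos s). pose proof (Rabs_pos (c - a)). pose proof (Rabs_pos (f' c - f' a)).
   apply Rle_trans with (K * Rabs (c - a) * Rabs s). apply Rmult_le_compat_r; auto.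
   rewrite <- H1. simpl. rewrite Rmult_1_r, <- Rmult_assoc. apply Rmult_le_compat_r; auto. apply Rmult_le_compat_l; auto.
 - subst. replace (f (a + 0) - f a - f' a * 0) with 0 by (rewrite Rplus_0_r; ring). rewrite Rabs_R0. nra.
 - destruct (MVT_cor2 f f' a (a + s)) as [c [Hc Hc2]]. lra. intros; apply Hd.
   rewrite Hc. replace (f' c * (a + s - a) - f' a * s) with ((f' c - f' a) * s) by ring.
   rewrite Rabs_mult. specialize (HK c a).
   assert (Rabs (c - a) <= Rabs s) by (rewrite !Rabs_right by lra; lra).
   assert (Rabs s ^ 2 = s ^ 2) by (unfold Rabs; destruct Rcase_abs; ring).
   pose proof (Rabs_pos s). pose proof (Rabs_pos (c - a)). pose proof (Rabs_pos (f' c - f' a)).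
   apply Rle_trans with (K * Rabs (c - a) * Rabs s). apply Rmult_le_compat_r; auto.
   rewrite <- H1. simpl. rewrite Rmult_1_r, <- Rmult_assoc. apply Rmult_le_compat_r; auto. apply Rmult_le_compat_l; auto.
Qed.

Definition psi (u : R) := 1 - exp (- u ^ 2).
Definition dpsi (u : R) := 2 * u * exp (- u ^ 2).
Definition ddpsi (u : R) := (2 - 4 * u ^ 2) * exp (- u ^ 2).

Lemma psi_deriv x : derivable_pt_lim psi x (dpsi x).
Proof. apply is_derive_Reals. unfold psi, dpsi. auto_derive; auto. replace (x * (x * 1)) with (x ^ 2) by ring. ring. Qed.
Lemma dpsi_deriv x : derivable_pt_lim dpsi x (ddpsi x).
Proof. apply is_derive_Reals. unfold ddpsi, dpsi. auto_derive; auto. replace (x * (x * 1)) with (x ^ 2) by ring. ring. Qed.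

Lemma exp_sq_bound x : 0 <= x -> 1 + x + x ^ 2 / 4 <= exp x.
Proof. intros. assert (E: exp x = exp (x/2) * exp (x/2)) by (rewrite <- exp_plus; f_equal; field). rewrite E.
 pose proof (exp_ineq1_le (x/2)). nra. Qed.

Lemma exp_neg_eq u : exp (- u ^ 2) * exp (u ^ 2) = 1.
Proof. rewrite <- exp_plus. replace (- u^2 + u^2) with 0 by ring. apply exp_0. Qed.

Lemma dpsi_bound x : Rabs (dpsi x) <= 1.
Proof. unfold dpsi. pose proof (exp_neg_eq x). pose proof (exp_pos (- x^2)). pose proof (exp_pos (x^2)).
 pose proof (exp_ineq1_le (x^2)). apply Rabs_le.
 assert (0 <= (x-1)^2) by apply pow2_ge_0. assert (0 <= (x+1)^2) by apply pow2_ge_0.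
 assert (0 <= exp (- x^2) * (exp (x^2) - 2 * x)) by (apply Rmult_le_pos; nra).
 assert (0 <= exp (- x^2) * (exp (x^2) + 2 * x)) by (apply Rmult_le_pos; nra).
 split; nra. Qed.

Lemma ddpsi_bound x : Rabs (ddpsi x) <= 2.
Proof. unfold ddpsi. pose proof (exp_neg_eq x). pose proof (exp_pos (- x^2)). pose proof (exp_pos (x^2)).
 pose proof (exp_sq_bound (x^2) (pow2_ge_0 x)). apply Rabs_le.
 assert (0 <= (x^2 - 2)^2) by apply pow2_ge_0.
 assert (0 <= exp (- x^2) * (2 * exp (x^2) - (2 - 4 * x^2))) by (apply Rmult_le_pos; nra).
 assert (0 <= exp (- x^2) * (2 * exp (x^2) + (2 - 4 * x^2))) by (apply Rmult_le_pos; nra).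
 split; nra. Qed.

Lemma psi_lip a b : Rabs (psi b - psi a) <= Rabs (b - a).
Proof. rewrite <- (Rmult_1_l (Rabs (b - a))). apply (lip_deriv psi dpsi). apply psi_deriv. apply dpsi_bound. Qed.
Lemma dpsi_lip a b : Rabs (dpsi b - dpsi a) <= 2 * Rabs (b - a).
Proof. apply (lip_deriv dpsi ddpsi). apply dpsi_deriv. apply ddpsi_bound. Qed.
Lemma psi_qb a s : Rabs (psi (a + s) - psi a - dpsi a * s) <= 2 * s ^ 2.
Proof. apply (qb_deriv psi dpsi). apply psi_deriv. intros x y. rewrite <- (Rabs_Ropp (x - y)), <- (Rabs_Ropp (dpsi x - dpsi y)).
 replace (- (x - y)) with (y - x) by ring. replace (- (dpsi x - dpsi y)) with (dpsi y - dpsi x) by ring. apply dpsi_lip. Qed.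

Lemma psi0 : psi 0 = 0.
Proof. unfold psi. replace (- 0 ^ 2) with 0 by ring. rewrite exp_0; ring. Qed.
Lemma dpsi0 : dpsi 0 = 0.
Proof. unfold dpsi. ring. Qed.

Definition dPsi (u : R) : R := if Rle_dec u 0 then 0 else dpsi u.

Lemma Psi_eq u : Psi u = if Rle_dec u 0 then 0 else psi u.
Proof. reflexivity. Qed.

Lemma Psi_range u : 0 <= Psi u <= 1.
Proof. unfold Psi. destruct Rle_dec. lra. pose proof (exp_pos (- u^2)).
 assert (exp (- u ^ 2) <= 1). { rewrite <- exp_0. destruct (Req_dec u 0). subst; lra.
   apply Rlt_le, exp_increasing. assert (0 < u^2) by (apply pow2_gt_0; auto). lra. }
 lra. Qed.

Lemma dPsi_bound u : Rabs (dPsi u) <= 1.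
Proof. unfold dPsi. destruct Rle_dec. rewrite Rabs_R0; lra. apply dpsi_bound. Qed.

Lemma clamp_lip (g : R -> R) K : g 0 = 0 -> (forall a b, Rabs (g b - g a) <= K * Rabs (b - a)) ->
  forall a b, Rabs ((if Rle_dec b 0 then 0 else g b) - (if Rle_dec a 0 then 0 else g a)) <= K * Rabs (b - a).
Proof. intros H0 H a b.
 assert (0 <= K) by (specialize (H 0 1); rewrite H0 in H; replace (1-0) with 1 in H by ring; rewrite Rabs_R1 in H;
   pose proof (Rabs_pos (g 1 - 0)); lra).
 destruct (Rle_dec b 0), (Rle_dec a 0).
 - replace (0 - 0) with 0 by ring. rewrite Rabs_R0. apply Rmult_le_pos; auto; apply Rabs_pos.
 - specialize (H a 0). rewrite H0 in H. replace (0 - g a) with (0 - g a) by ring.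
   eapply Rle_trans. apply H. apply Rmult_le_compat_l; auto. rewrite !Rabs_left1 by lra; lra.
 - specialize (H 0 b). rewrite H0 in H. replace (g b - 0) with (g b - 0) by ring.
   eapply Rle_trans. apply H. apply Rmult_le_compat_l; auto. rewrite !Rabs_right by lra; lra.
 - apply H.
Qed.

Lemma Psi_lip a b : Rabs (Psi b - Psi a) <= Rabs (b - a).
Proof. rewrite <- (Rmult_1_l (Rabs (b - a))). rewrite !Psi_eq. apply clamp_lip. apply psi0.
 intros; rewrite Rmult_1_l; apply psi_lip. Qed.
Lemma dPsi_lip a b : Rabs (dPsi b - dPsi a) <= 2 * Rabs (b - a).
Proof. unfold dPsi. apply clamp_lip. apply dpsi0. apply dpsi_lip. Qed.

Lemma Psi_qb a s : Rabs (Psi (a + s) - Psi a - dPsi a * s) <= 4 * s ^ 2.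
Proof. rewrite !Psi_eq. unfold dPsi. assert (0 <= s^2) by apply pow2_ge_0.
 destruct (Rle_dec (a + s) 0), (Rle_dec a 0).
 - replace (0 - 0 - 0 * s) with 0 by ring. rewrite Rabs_R0. lra.
 -
   pose proof (psi_qb a (-a)). replace (a + - a) with 0 in H0 by ring. rewrite psi0 in H0.
   pose proof (dpsi_lip 0 a). rewrite dpsi0 in H1. replace (a - 0) with a in H1 by ring.
   rewrite (Rabs_right a) in H1 by lra.
   replace (0 - psi a - dpsi a * s) with ((0 - psi a - dpsi a * (-a)) - dpsi a * (s + a)) by ring.
   eapply Rle_trans. apply Rabs_triang. rewrite Rabs_Ropp, Rabs_mult.
   replace (dpsi a - 0) with (dpsi a) in H1 by ring.
   assert (Rabs (s + a) <= - s) by (rewrite Rabs_left1 by lra; lra).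
   pose proof (Rabs_pos (dpsi a)). pose proof (Rabs_pos (s + a)).
   assert (2 * (-a)^2 <= 2 * s^2) by nra. nra.
 -
   pose proof (psi_qb 0 (a + s)). rewrite psi0, dpsi0, Rplus_0_l in H0.
   replace (psi (a + s) - 0 - 0 * s) with (psi (a + s) - 0 - 0 * (a + s)) by ring.
   eapply Rle_trans. apply H0. nra.
 - eapply Rle_trans. apply psi_qb. lra.
Qed.

Definition dPhi (v : R) : R := 4 / (1 + v ^ 2).
Definition ddPhi (v : R) : R := - 8 * v / (1 + v ^ 2) ^ 2.

Lemma Phi_deriv x : derivable_pt_lim Phi x (dPhi x).
Proof. replace (dPhi x) with (4 * / (1 + x^2) + 0) by (unfold dPhi; field; nra).
 apply (derivable_pt_lim_plus (mult_real_fct 4 atan) (fct_cte (2*PI))).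
 apply derivable_pt_lim_scal. apply derivable_pt_lim_atan. apply derivable_pt_lim_const. Qed.
Lemma dPhi_deriv x : derivable_pt_lim dPhi x (ddPhi x).
Proof. apply is_derive_Reals. unfold dPhi, ddPhi. auto_derive. nra. field. nra. Qed.

Lemma Phi_range v : 0 <= Phi v <= 4 * PI.
Proof. unfold Phi. pose proof (atan_bound v). lra. Qed.
Lemma Phi_opp v : Phi (- v) + Phi v = 4 * PI.
Proof. unfold Phi. rewrite atan_opp. ring. Qed.
Lemma dPhi_bound v : Rabs (dPhi v) <= 4.
Proof. unfold dPhi. assert (0 <= v^2) by apply pow2_ge_0. rewrite Rabs_right.
 apply Rmult_le_reg_r with (1 + v^2). lra. unfold Rdiv. rewrite Rmult_assoc, Rinv_l by lra. nra.
 apply Rle_ge, Rlt_le. apply Rdiv_lt_0_compat; lra. Qed.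
Lemma dPhi_opp v : dPhi (- v) = dPhi v.
Proof. unfold dPhi. f_equal. ring. Qed.
Lemma ddPhi_bound v : Rabs (ddPhi v) <= 4.
Proof. unfold ddPhi. assert (0 <= v^2) by apply pow2_ge_0.
 assert (0 < (1 + v^2)^2) by nra.
 unfold Rdiv. rewrite Rabs_mult, Rabs_inv, (Rabs_right ((1+v^2)^2)) by lra.
 apply Rmult_le_reg_r with ((1 + v^2)^2). lra. rewrite Rmult_assoc, Rinv_l by lra.
 rewrite Rmult_1_r. apply Rabs_le. assert (0 <= (v-1)^2) by apply pow2_ge_0. assert (0 <= (v+1)^2) by apply pow2_ge_0.
 split; nra. Qed.

Lemma Phi_lip a b : Rabs (Phi b - Phi a) <= 4 * Rabs (b - a).
Proof. apply (lip_deriv Phi dPhi). apply Phi_deriv. apply dPhi_bound. Qed.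
Lemma dPhi_lip a b : Rabs (dPhi b - dPhi a) <= 4 * Rabs (b - a).
Proof. apply (lip_deriv dPhi ddPhi). apply dPhi_deriv. apply ddPhi_bound. Qed.
Lemma Phi_qb a s : Rabs (Phi (a + s) - Phi a - dPhi a * s) <= 4 * s ^ 2.
Proof. apply (qb_deriv Phi dPhi). apply Phi_deriv. intros x y. rewrite <- (Rabs_Ropp (x - y)), <- (Rabs_Ropp (dPhi x - dPhi y)).
 replace (- (x - y)) with (y - x) by ring. replace (- (dPhi x - dPhi y)) with (dPhi y - dPhi x) by ring. apply dPhi_lip. Qed.

Lemma absmul x y X Y : Rabs x <= X -> Rabs y <= Y -> Rabs (x * y) <= X * Y.
Proof. intros. rewrite Rabs_mult. apply Rmult_le_compat; auto; apply Rabs_pos. Qed.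
Lemma abs4 a b c d : Rabs (a + b + c + d) <= Rabs a + Rabs b + Rabs c + Rabs d.
Proof. eapply Rle_trans. apply Rabs_triang. eapply Rle_trans. apply Rplus_le_compat_r. apply Rabs_triang.
 eapply Rle_trans. apply Rplus_le_compat_r, Rplus_le_compat_r. apply Rabs_triang. lra. Qed.
Lemma abs3 a b c : Rabs (a + b + c) <= Rabs a + Rabs b + Rabs c.
Proof. eapply Rle_trans. apply Rabs_triang. eapply Rle_trans. apply Rplus_le_compat_r. apply Rabs_triang. lra. Qed.
Lemma absopp_diff a b : Rabs (- b - - a) = Rabs (b - a).
Proof. rewrite <- Rabs_Ropp. f_equal. ring. Qed.

Lemma Psi_abs u : Rabs (Psi u) <= 1.
Proof. pose proof (Psi_range u). rewrite Rabs_right; lra. Qed.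
Lemma Phi_abs u : Rabs (Phi u) = Phi u.
Proof. pose proof (Phi_range u). rewrite Rabs_right; lra. Qed.
Lemma Rabs_sq x : Rabs x ^ 2 = x ^ 2.
Proof. unfold Rabs; destruct Rcase_abs; ring. Qed.

Definition P (a b : R) := Psi (- a) * Phi (- b) - Psi a * Phi b.
Definition Pa (a b : R) := - dPsi (- a) * Phi (- b) - dPsi a * Phi b.
Definition Pb (a b : R) := - Psi (- a) * dPhi (- b) - Psi a * dPhi b.

Lemma T_qb a b s t : Rabs (Psi (a + s) * Phi (b + t) - Psi a * Phi b - dPsi a * Phi b * s - Psi a * dPhi b * t)
   <= 100 * (s ^ 2 + t ^ 2).
Proof.
 set (r1 := Psi (a + s) - Psi a - dPsi a * s). set (r2 := Phi (b + t) - Phi b - dPhi b * t).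
 replace (Psi (a + s) * Phi (b + t) - Psi a * Phi b - dPsi a * Phi b * s - Psi a * dPhi b * t)
   with (dPsi a * s * (Phi (b + t) - Phi b) + r1 * Phi (b + t) + Psi a * r2) by (unfold r1, r2; ring).
 eapply Rle_trans. apply abs3.
 assert (H1 : Rabs (dPsi a * s * (Phi (b + t) - Phi b)) <= (1 * Rabs s) * (4 * Rabs t)).
 { apply absmul. rewrite Rabs_mult. apply Rmult_le_compat_r. apply Rabs_pos. apply dPsi_bound.
   replace t with (b + t - b) at 2 by ring. apply Phi_lip. }
 assert (H2 : Rabs (r1 * Phi (b + t)) <= (4 * s ^ 2) * (4 * PI)).
 { apply absmul. apply Psi_qb. rewrite Phi_abs. apply Phi_range. }
 assert (H3 : Rabs (Psi a * r2) <= 1 * (4 * t ^ 2)).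
 { apply absmul. apply Psi_abs. apply Phi_qb. }
 pose proof PI_4. pose proof (Rabs_sq s). pose proof (Rabs_sq t).
 assert (0 <= (Rabs s - Rabs t)^2) by apply pow2_ge_0. pose proof (pow2_ge_0 s).
 nra. Qed.

Lemma P_qb a b s t : Rabs (P (a + s) (b + t) - P a b - Pa a b * s - Pb a b * t) <= 200 * (s ^ 2 + t ^ 2).
Proof. unfold P, Pa, Pb.
 pose proof (T_qb (-a) (-b) (-s) (-t)). pose proof (T_qb a b s t).
 replace (- (a + s)) with (- a + - s) by ring. replace (- (b + t)) with (- b + - t) by ring.
 replace ((-s)^2) with (s^2) in H by ring. replace ((-t)^2) with (t^2) in H by ring.
 match goal with |- Rabs ?E <= _ => replace E with
   ((Psi (- a + - s) * Phi (- b + - t) - Psi (- a) * Phi (- b) - dPsi (- a) * Phi (- b) * - s - Psi (- a) * dPhi (- b) * - t)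
   - (Psi (a + s) * Phi (b + t) - Psi a * Phi b - dPsi a * Phi b * s - Psi a * dPhi b * t)) by ring end.
 eapply Rle_trans. unfold Rminus at 1. apply Rabs_triang. rewrite Rabs_Ropp. lra. Qed.

Lemma P_lip a b a' b' : Rabs (P a' b' - P a b) <= 4 * PI * Rabs (a' - a) + 8 * Rabs (b' - b).
Proof. unfold P.
 replace (Psi (- a') * Phi (- b') - Psi a' * Phi b' - (Psi (- a) * Phi (- b) - Psi a * Phi b))
  with ((Psi (- a') - Psi (- a)) * Phi (- b') + Psi (- a) * (Phi (- b') - Phi (- b))
        + (- (Psi a' - Psi a)) * Phi b' + (- Psi a) * (Phi b' - Phi b)) by ring.
 eapply Rle_trans. apply abs4.
 pose proof (Psi_lip (-a) (-a')). rewrite absopp_diff in H.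
 pose proof (Phi_lip (-b) (-b')). rewrite absopp_diff in H0.
 pose proof (Psi_lip a a'). pose proof (Phi_lip b b').
 assert (A1 : Rabs ((Psi (- a') - Psi (- a)) * Phi (- b')) <= Rabs (a' - a) * Phi (- b')).
 { apply absmul; auto. rewrite Phi_abs; lra. }
 assert (A2 : Rabs (Psi (- a) * (Phi (- b') - Phi (- b))) <= 1 * (4 * Rabs (b' - b))).
 { apply absmul; auto. apply Psi_abs. }
 assert (A3 : Rabs (- (Psi a' - Psi a) * Phi b') <= Rabs (a' - a) * Phi b').
 { apply absmul; auto. rewrite Rabs_Ropp; auto. rewrite Phi_abs; lra. }
 assert (A4 : Rabs (- Psi a * (Phi b' - Phi b)) <= 1 * (4 * Rabs (b' - b))).
 { apply absmul; auto. rewrite Rabs_Ropp; apply Psi_abs. }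
 assert (Rabs (a'-a) * Phi (-b') + Rabs (a'-a) * Phi b' = 4 * PI * Rabs (a'-a)) by (rewrite <- Rmult_plus_distr_l, Phi_opp; ring). lra. Qed.

Lemma Pa_lip a b a' b' : Rabs (Pa a' b' - Pa a b) <= 8 * PI * Rabs (a' - a) + 8 * Rabs (b' - b).
Proof. unfold Pa.
 replace (- dPsi (- a') * Phi (- b') - dPsi a' * Phi b' - (- dPsi (- a) * Phi (- b) - dPsi a * Phi b))
  with ((- (dPsi (- a') - dPsi (- a))) * Phi (- b') + (- dPsi (- a)) * (Phi (- b') - Phi (- b))
        + (- (dPsi a' - dPsi a)) * Phi b' + (- dPsi a) * (Phi b' - Phi b)) by ring.
 eapply Rle_trans. apply abs4.
 pose proof (dPsi_lip (-a) (-a')). rewrite absopp_diff in H.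
 pose proof (Phi_lip (-b) (-b')). rewrite absopp_diff in H0.
 pose proof (dPsi_lip a a'). pose proof (Phi_lip b b').
 assert (A1 : Rabs (- (dPsi (- a') - dPsi (- a)) * Phi (- b')) <= (2 * Rabs (a' - a)) * Phi (- b')).
 { apply absmul; auto. rewrite Rabs_Ropp; auto. rewrite Phi_abs; lra. }
 assert (A2 : Rabs (- dPsi (- a) * (Phi (- b') - Phi (- b))) <= 1 * (4 * Rabs (b' - b))).
 { apply absmul; auto. rewrite Rabs_Ropp; apply dPsi_bound. }
 assert (A3 : Rabs (- (dPsi a' - dPsi a) * Phi b') <= (2 * Rabs (a' - a)) * Phi b').
 { apply absmul; auto. rewrite Rabs_Ropp; auto. rewrite Phi_abs; lra. }
 assert (A4 : Rabs (- dPsi a * (Phi b' - Phi b)) <= 1 * (4 * Rabs (b' - b))).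
 { apply absmul; auto. rewrite Rabs_Ropp; apply dPsi_bound. }
 assert (2 * Rabs (a'-a) * Phi (-b') + 2 * Rabs (a'-a) * Phi b' = 8 * PI * Rabs (a'-a)) by (rewrite Rmult_assoc, Rmult_assoc, <- Rmult_plus_distr_l, <- Rmult_plus_distr_l, Phi_opp; ring). lra. Qed.

Lemma Pb_lip a b a' b' : Rabs (Pb a' b' - Pb a b) <= 8 * Rabs (a' - a) + 8 * Rabs (b' - b).
Proof. unfold Pb.
 replace (- Psi (- a') * dPhi (- b') - Psi a' * dPhi b' - (- Psi (- a) * dPhi (- b) - Psi a * dPhi b))
  with ((- (Psi (- a') - Psi (- a))) * dPhi (- b') + (- Psi (- a)) * (dPhi (- b') - dPhi (- b))
        + (- (Psi a' - Psi a)) * dPhi b' + (- Psi a) * (dPhi b' - dPhi b)) by ring.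
 eapply Rle_trans. apply abs4.
 pose proof (Psi_lip (-a) (-a')). rewrite absopp_diff in H.
 pose proof (dPhi_lip (-b) (-b')). rewrite absopp_diff in H0.
 pose proof (Psi_lip a a'). pose proof (dPhi_lip b b').
 assert (A1 : Rabs (- (Psi (- a') - Psi (- a)) * dPhi (- b')) <= Rabs (a' - a) * 4).
 { apply absmul; auto. rewrite Rabs_Ropp; auto. apply dPhi_bound. }
 assert (A2 : Rabs (- Psi (- a) * (dPhi (- b') - dPhi (- b))) <= 1 * (4 * Rabs (b' - b))).
 { apply absmul; auto. rewrite Rabs_Ropp; apply Psi_abs. }
 assert (A3 : Rabs (- (Psi a' - Psi a) * dPhi b') <= Rabs (a' - a) * 4).
 { apply absmul; auto. rewrite Rabs_Ropp; auto. apply dPhi_bound. }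
 assert (A4 : Rabs (- Psi a * (dPhi b' - dPhi b)) <= 1 * (4 * Rabs (b' - b))).
 { apply absmul; auto. rewrite Rabs_Ropp; apply Psi_abs. }
 lra. Qed.

Lemma P00 : P 0 0 = 0.
Proof. unfold P. rewrite Ropp_0. ring. Qed.
Lemma P_lb a b : - (4 * PI) <= P a b.
Proof. unfold P. pose proof (Psi_range (-a)). pose proof (Psi_range a).
 pose proof (Phi_range (-b)). pose proof (Phi_range b). nra. Qed.


Definition sel (o D j : nat) (F : nat -> R) : R :=
  if andb (o <=? j)%nat (j - o <? 2 * D)%nat then F j else 0.

Lemma rsum_const n c : rsum n (fun _ => c) = INR n * c.
Proof. induction n; simpl rsum. simpl; ring. rewrite IHn, S_INR; ring. Qed.

Lemma pair_sum o D n F : (2 * D + o <= n)%nat ->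
  rsum n (fun j => sel o D j F) = rsum D (fun k => F (2 * k + o)%nat + F (2 * k + o + 1)%nat).
Proof. intros Hn.
 rewrite (rsum_tail0 (o + 2 * D)); [| lia |].
 2:{ intros k Hk. unfold sel. destruct (Nat.leb_spec o k), (Nat.ltb_spec (k - o) (2 * D)); simpl; auto; lia. }
 rewrite rsum_add.
 rewrite (rsum_ext o _ (fun _ => 0)).
 2:{ intros k Hk. unfold sel. destruct (Nat.leb_spec o k); simpl; auto; lia. }
 rewrite rsum_const0, Rplus_0_l.
 rewrite (rsum_ext (2 * D) _ (fun k => F (o + k)%nat)).
 2:{ intros k Hk. unfold sel. destruct (Nat.leb_spec o (o + k)), (Nat.ltb_spec (o + k - o) (2 * D)); simpl; auto; lia. }
 rewrite rsum_pairs. apply rsum_ext. intros k Hk. f_equal; f_equal; lia. Qed.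

Lemma sel_mul o D j F g : sel o D j F * g j = sel o D j (fun i => F i * g i).
Proof. unfold sel. destruct (andb _ _); ring. Qed.
Lemma sel_le o D j F : 0 <= F j -> sel o D j F <= F j.
Proof. unfold sel. destruct (andb _ _); lra. Qed.

Lemma even_2k k : Nat.even (2 * k) = true.
Proof. rewrite Nat.even_mul. reflexivity. Qed.
Lemma even_2k1 k : Nat.even (2 * k + 1) = false.
Proof. rewrite Nat.even_add, Nat.even_mul. reflexivity. Qed.

Definition Hf (o D : nat) (z : nat -> R) : R :=
  - Psi 1 * Phi (z 0%nat) + 3 * rsum D (fun k => P (z (2 * k + o)%nat) (z (2 * k + o + 1)%nat)).
Definition Fz (o : nat) (z : nat -> R) (j : nat) : R :=
  if Nat.even (j - o) then Pa (z j) (z (S j)) else Pb (z (j - 1)%nat) (z j).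
Definition GH (o D : nat) (z : nat -> R) : nat -> R :=
  fun j => (if (j =? 0)%nat then - Psi 1 * dPhi (z 0%nat) else 0) + 3 * sel o D j (Fz o z).

Lemma Fz_even o z k : Fz o z (2 * k + o)%nat = Pa (z (2 * k + o)%nat) (z (2 * k + o + 1)%nat).
Proof. unfold Fz. replace (2 * k + o - o)%nat with (2 * k)%nat by lia. rewrite even_2k.
 f_equal. f_equal. lia. Qed.
Lemma Fz_odd o z k : Fz o z (2 * k + o + 1)%nat = Pb (z (2 * k + o)%nat) (z (2 * k + o + 1)%nat).
Proof. unfold Fz. replace (2 * k + o + 1 - o)%nat with (2 * k + 1)%nat by lia. rewrite even_2k1.
 f_equal. f_equal. lia. Qed.

Lemma dot_GH o D n z h : (1 <= n)%nat -> (2 * D + o <= n)%nat ->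
  dot n (GH o D z) h = - Psi 1 * dPhi (z 0%nat) * h 0%nat +
    3 * rsum D (fun k => Pa (z (2 * k + o)%nat) (z (2 * k + o + 1)%nat) * h (2 * k + o)%nat
                       + Pb (z (2 * k + o)%nat) (z (2 * k + o + 1)%nat) * h (2 * k + o + 1)%nat).
Proof. intros H1 H2. unfold dot, GH.
 rewrite (rsum_ext n _ (fun j => (if (j =? 0)%nat then - Psi 1 * dPhi (z 0%nat) else 0) * h j
     + 3 * sel o D j (fun j => Fz o z j * h j))).
 2:{ intros; rewrite <- sel_mul; ring. }
 rewrite rsum_plus, rsum_scal, rsum_delta0 by auto. rewrite pair_sum by auto.
 f_equal. f_equal. apply rsum_ext; intros k Hk. rewrite Fz_even, Fz_odd. ring. Qed.

Lemma H_qb o D n z h : (1 <= n)%nat -> (2 * D + o <= n)%nat ->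
  Rabs (Hf o D (vadd z h) - Hf o D z - dot n (GH o D z) h) <= (4 + 1200 * INR D) * dot n h h.
Proof. intros H1 H2. rewrite dot_GH by auto. unfold Hf, vadd.
 set (Q := dot n h h).
 set (A := - Psi 1 * (Phi (z 0%nat + h 0%nat) - Phi (z 0%nat) - dPhi (z 0%nat) * h 0%nat)).
 set (B := rsum D (fun k => P (z (2 * k + o)%nat + h (2 * k + o)%nat) (z (2 * k + o + 1)%nat + h (2 * k + o + 1)%nat)
      - P (z (2 * k + o)%nat) (z (2 * k + o + 1)%nat)
      - Pa (z (2 * k + o)%nat) (z (2 * k + o + 1)%nat) * h (2 * k + o)%nat
      - Pb (z (2 * k + o)%nat) (z (2 * k + o + 1)%nat) * h (2 * k + o + 1)%nat)).
 match goal with |- Rabs ?E <= _ => replace E with (A + 3 * B) end.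
 2:{ unfold A, B. rewrite !rsum_minus. rewrite rsum_plus. ring. }
 assert (HA : Rabs A <= 4 * Q).
 { unfold A. rewrite Rabs_mult, Rabs_Ropp. pose proof (Psi_abs 1). pose proof (Phi_qb (z 0%nat) (h 0%nat)).
   pose proof (coord_sq n h 0 ltac:(lia)). fold Q in H3. pose proof (Rabs_pos (Psi 1)).
   apply Rle_trans with (1 * (4 * h 0%nat ^ 2)). apply Rmult_le_compat; auto. apply Rabs_pos. nra. }
 assert (HB : Rabs B <= INR D * (400 * Q)).
 { unfold B. eapply Rle_trans. apply rsum_abs. rewrite <- rsum_const. apply rsum_le. intros k Hk.
   eapply Rle_trans. apply P_qb.
   pose proof (coord_sq n h (2 * k + o) ltac:(lia)). pose proof (coord_sq n h (2 * k + o + 1) ltac:(lia)).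
   fold Q in H, H0. nra. }
 eapply Rle_trans. apply Rabs_triang. rewrite Rabs_mult, (Rabs_right 3) by lra. nra. Qed.

Lemma sq_le_of_abs x B : Rabs x <= B -> x ^ 2 <= B ^ 2.
Proof. intros H. rewrite <- Rabs_sq. pose proof (Rabs_pos x). nra. Qed.

Lemma pair_glip a b a' b' :
  (Pa a' b' - Pa a b) ^ 2 + (Pb a' b' - Pb a b) ^ 2 <= 2176 * ((a' - a) ^ 2 + (b' - b) ^ 2).
Proof. pose proof (sq_le_of_abs _ _ (Pa_lip a b a' b')). pose proof (sq_le_of_abs _ _ (Pb_lip a b a' b')).
 pose proof PI_4. pose proof PI_RGT_0. rewrite <- (Rabs_sq (a' - a)), <- (Rabs_sq (b' - b)).
 set (x := Rabs (a' - a)) in *. set (y := Rabs (b' - b)) in *.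
 assert (0 <= (PI * x - y)^2) by apply pow2_ge_0. assert (0 <= (x - y)^2) by apply pow2_ge_0.
 assert (PI^2 <= 16) by nra. assert (PI^2 * x^2 <= 16 * x^2) by (apply Rmult_le_compat_r; [apply pow2_ge_0|lra]).
 assert ((8 * PI * x + 8 * y) ^ 2 <= 128 * PI^2 * x^2 + 128 * y^2).
 { replace (128 * PI^2 * x^2 + 128 * y^2) with ((8 * PI * x + 8 * y) ^ 2 + 64 * (PI * x - y)^2) by ring. lra. }
 assert ((8 * x + 8 * y) ^ 2 <= 128 * x^2 + 128 * y^2).
 { replace (128 * x^2 + 128 * y^2) with ((8 * x + 8 * y) ^ 2 + 64 * (x - y)^2) by ring. lra. }
 pose proof (pow2_ge_0 y). lra. Qed.

Lemma H_glip o D n x y : (1 <= n)%nat -> (2 * D + o <= n)%nat ->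
  dot n (vsub (GH o D x) (GH o D y)) (vsub (GH o D x) (GH o D y)) <= 39200 * dot n (vsub x y) (vsub x y).
Proof. intros H1 H2. set (v := vsub x y). set (Q := dot n v v).
 set (Aa := - Psi 1 * dPhi (x 0%nat) - - Psi 1 * dPhi (y 0%nat)).
 unfold dot at 1. 
 apply Rle_trans with (rsum n (fun j => 2 * ((if (j =? 0)%nat then Aa * Aa else 0) * 1)
     + 18 * sel o D j (fun j => (Fz o x j - Fz o y j) ^ 2))).
 { apply rsum_le. intros j Hj. unfold vsub, GH.
   match goal with |- (?a1 + 3 * ?s1 - (?a2 + 3 * ?s2)) * _ <= _ =>
     replace ((a1 + 3 * s1 - (a2 + 3 * s2)) * (a1 + 3 * s1 - (a2 + 3 * s2))) with (((a1 - a2) + 3 * (s1 - s2))^2) by ring;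
     apply Rle_trans with (2 * (a1 - a2)^2 + 18 * (s1 - s2)^2);
     [ pose proof (pow2_ge_0 ((a1 - a2) - 3 * (s1 - s2))); nra | ] end.
   apply Rplus_le_compat; apply Rmult_le_compat_l; try lra.
   unfold Aa; destruct (j =? 0)%nat; right; ring.
   unfold sel; destruct (andb _ _); right; ring. }
 rewrite rsum_plus, !rsum_scal, rsum_delta0, pair_sum by auto.
 rewrite (rsum_ext D _ (fun k => (Pa (x (2 * k + o)%nat) (x (2 * k + o + 1)%nat) - Pa (y (2 * k + o)%nat) (y (2 * k + o + 1)%nat)) ^ 2
   + (Pb (x (2 * k + o)%nat) (x (2 * k + o + 1)%nat) - Pb (y (2 * k + o)%nat) (y (2 * k + o + 1)%nat)) ^ 2)).
 2:{ intros k Hk. rewrite !Fz_even, !Fz_odd. reflexivity. }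
 assert (HS : rsum D (fun k => (Pa (x (2 * k + o)%nat) (x (2 * k + o + 1)%nat) - Pa (y (2 * k + o)%nat) (y (2 * k + o + 1)%nat)) ^ 2
   + (Pb (x (2 * k + o)%nat) (x (2 * k + o + 1)%nat) - Pb (y (2 * k + o)%nat) (y (2 * k + o + 1)%nat)) ^ 2) <= 2176 * Q).
 { apply Rle_trans with (2176 * rsum D (fun k => v (2 * k + o)%nat ^ 2 + v (2 * k + o + 1)%nat ^ 2)).
   rewrite <- rsum_scal. apply rsum_le. intros k Hk. apply pair_glip.
   apply Rmult_le_compat_l. lra. rewrite <- (pair_sum o D n (fun j => v j ^ 2)) by auto.
   unfold Q, dot. apply rsum_le. intros j Hj. eapply Rle_trans. apply sel_le. apply pow2_ge_0. right; ring. }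
 assert (HA : Aa * Aa <= 16 * Q).
 { unfold Aa. replace (- Psi 1 * dPhi (x 0%nat) - - Psi 1 * dPhi (y 0%nat)) with (Psi 1 * (dPhi (y 0%nat) - dPhi (x 0%nat))) by ring.
   pose proof (Psi_range 1). pose proof (dPhi_lip (x 0%nat) (y 0%nat)).
   pose proof (coord_sq n v 0 ltac:(lia)). fold Q in H3. unfold v, vsub in H3.
   pose proof (sq_le_of_abs _ _ H0).
   assert (E1 : (4 * Rabs (y 0%nat - x 0%nat))^2 = 16 * ((x 0%nat - y 0%nat) * (x 0%nat - y 0%nat))).
   { replace ((4 * Rabs (y 0%nat - x 0%nat))^2) with (16 * Rabs (y 0%nat - x 0%nat)^2) by ring. rewrite Rabs_sq. ring. }
   assert (HD : (dPhi (y 0%nat) - dPhi (x 0%nat))^2 <= 16 * Q) by lra.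
   set (Dd := dPhi (y 0%nat) - dPhi (x 0%nat)) in *.
   assert (Psi 1 * Psi 1 <= 1) by nra. pose proof (pow2_ge_0 Dd).
   replace (Psi 1 * Dd * (Psi 1 * Dd)) with ((Psi 1 * Psi 1) * Dd^2) by ring. nra. }
 lra. Qed.

Lemma H_lip o D n x y : (1 <= n)%nat -> (2 * D + o <= n)%nat ->
  Rabs (Hf o D x - Hf o D y) <= (4 + 24 * PI * sqrt (INR n)) * enorm n (vsub x y).
Proof. intros H1 H2. set (v := vsub x y). unfold Hf.
 replace (- Psi 1 * Phi (x 0%nat) + 3 * rsum D (fun k => P (x (2 * k + o)%nat) (x (2 * k + o + 1)%nat)) -
   (- Psi 1 * Phi (y 0%nat) + 3 * rsum D (fun k => P (y (2 * k + o)%nat) (y (2 * k + o + 1)%nat))))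
  with (- Psi 1 * (Phi (x 0%nat) - Phi (y 0%nat)) + 3 * rsum D (fun k => P (x (2 * k + o)%nat) (x (2 * k + o + 1)%nat) - P (y (2 * k + o)%nat) (y (2 * k + o + 1)%nat)))
  by (rewrite rsum_minus; ring).
 eapply Rle_trans. apply Rabs_triang.
 assert (HA : Rabs (- Psi 1 * (Phi (x 0%nat) - Phi (y 0%nat))) <= 4 * enorm n v).
 { rewrite <- (Rmult_1_l (4 * enorm n v)). apply absmul. rewrite Rabs_Ropp; apply Psi_abs.
   eapply Rle_trans. apply Phi_lip. apply Rmult_le_compat_l. lra. apply (coord_le_norm n v 0). lia. }
 assert (HB : Rabs (rsum D (fun k => P (x (2 * k + o)%nat) (x (2 * k + o + 1)%nat) - P (y (2 * k + o)%nat) (y (2 * k + o + 1)%nat)))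
    <= 8 * PI * (sqrt (INR n) * enorm n v)).
 { eapply Rle_trans. apply rsum_abs.
   apply Rle_trans with (8 * PI * rsum D (fun k => Rabs (v (2 * k + o)%nat) + Rabs (v (2 * k + o + 1)%nat))).
   rewrite <- rsum_scal. apply rsum_le. intros k Hk. eapply Rle_trans. apply P_lip.
   pose proof PI_RGT_0. pose proof PI2_3_2. unfold v, vsub. pose proof (Rabs_pos (x (2 * k + o)%nat - y (2 * k + o)%nat)).
   pose proof (Rabs_pos (x (2 * k + o + 1)%nat - y (2 * k + o + 1)%nat)). nra.
   apply Rmult_le_compat_l. pose proof PI_RGT_0; lra.
   rewrite <- (pair_sum o D n (fun j => Rabs (v j))) by auto.
   eapply Rle_trans. 2: apply sum_abs_le. apply rsum_le. intros j Hj. apply sel_le. apply Rabs_pos. }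
 rewrite (Rabs_mult 3), (Rabs_right 3) by lra. lra. Qed.

Lemma Phi0 : Phi 0 = 2 * PI.
Proof. unfold Phi. rewrite atan_0. ring. Qed.

Lemma H_a o D z w : (forall j, z j = 0) -> Hf o D z - Hf o D w <= 2 * PI + 12 * PI * INR D.
Proof. intros Hz. unfold Hf. rewrite (rsum_ext D _ (fun _ => 0)).
 2:{ intros k _. rewrite !Hz. apply P00. }
 rewrite rsum_const0, Hz, Phi0.
 assert (rsum D (fun k => P (w (2 * k + o)%nat) (w (2 * k + o + 1)%nat)) >= INR D * (- (4 * PI))).
 { rewrite <- rsum_const. apply Rle_ge, rsum_le. intros; apply P_lb. }
 pose proof (Psi_range 1). pose proof (Phi_range (w 0%nat)). nra. Qed.

Definition selo (m i : nat) : nat := if (i <=? m / 3)%nat then 0%nat else if (i <=? 2 * m / 3)%nat then 0%nat else 1%nat.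
Definition selD (m n i : nat) : nat := if (i <=? m / 3)%nat then Nat.div2 n else if (i <=? 2 * m / 3)%nat then 0%nat else Nat.div2 n.

Lemma h_eq m n i z : h m n i z = Hf (selo m i) (selD m n i) z.
Proof. unfold h, Hf, selo, selD. destruct (i <=? m / 3)%nat; [|destruct (i <=? 2 * m / 3)%nat].
 - f_equal. f_equal. apply rsum_ext. intros k _. rewrite Nat.add_0_r.
   replace (2 * S k)%nat with (S (S (2 * k))) by lia. replace (2 * k + 1)%nat with (S (2 * k)) by lia. reflexivity.
 - simpl rsum. simpl. ring.
 - f_equal. f_equal. apply rsum_ext. intros k _.
   replace (2 * S k + 1)%nat with (S (S (2 * k + 1))) by lia. replace (2 * k + 1 + 1)%nat with (S (2 * k + 1)) by lia. reflexivity.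
Qed.

Lemma sel_cond m n i : Nat.Odd n -> (2 * selD m n i + selo m i <= n)%nat /\ (2 * selD m n i <= n)%nat.
Proof. intros Ho. pose proof (Nat.Odd_double n Ho). unfold Nat.double in H. unfold selD, selo.
 destruct (i <=? m / 3)%nat; [|destruct (i <=? 2 * m / 3)%nat]; lia. Qed.

Lemma dot_scal_l n a u w : dot n (vscal a u) w = a * dot n u w.
Proof. unfold dot, vscal. rewrite <- rsum_scal. apply rsum_ext; intros; ring. Qed.
Lemma dot_scal_r n a u w : dot n u (vscal a w) = a * dot n u w.
Proof. unfold dot, vscal. rewrite <- rsum_scal. apply rsum_ext; intros; ring. Qed.
Lemma vscal_add a x y : vscal a (vadd x y) = vadd (vscal a x) (vscal a y).
Proof. apply functional_extensionality; intros; unfold vscal, vadd; ring. Qed.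
Lemma vscal_sub a x y : vsub (vscal a x) (vscal a y) = vscal a (vsub x y).
Proof. apply functional_extensionality; intros; unfold vscal, vsub; ring. Qed.
Lemma enorm_scal n a v : enorm n (vscal a v) = Rabs a * enorm n v.
Proof. unfold enorm. rewrite dot_scal_l, dot_scal_r, <- Rmult_assoc.
 rewrite sqrt_mult_alt by (apply Rle_0_sqr). fold (Rsqr a). rewrite sqrt_Rsqr_abs. auto. Qed.

Lemma qb_grad n f g C : 0 <= C -> (forall x h, Rabs (f (vadd x h) - f x - dot n (g x) h) <= C * dot n h h) ->
  forall x, has_gradient n f (g x) x.
Proof. intros HC H x e He. exists (e / (C + 1)). split. apply Rdiv_lt_0_compat; lra.
 intros h Hh. eapply Rle_trans. apply H. rewrite <- enorm_sq. pose proof (enorm_ge0 n h).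
 assert (C * enorm n h <= e).
 { apply Rle_trans with (C * (e / (C + 1))). apply Rmult_le_compat_l; lra.
   apply Rmult_le_reg_r with (C + 1). lra. replace (C * (e / (C + 1)) * (C + 1)) with (C * e) by (field; lra). nra. }
 nra. Qed.

Section Fi.
Variables (eps Lf : R) (m n : nat).
Hypotheses (Heps : 0 < eps) (HLf : 0 < Lf) (Hm : (1 <= m)%nat) (Hn : (5 <= n)%nat) (Ho : Nat.Odd n).

Let K := 300 * PI * eps ^ 2 / (INR m * Lf).
Let c := sqrt (INR m) * Lf / (150 * PI * eps).

Lemma INRm_pos : 0 < INR m. Proof. apply lt_0_INR; lia. Qed.
Lemma sqm_pos : 0 < sqrt (INR m). Proof. apply sqrt_lt_R0, INRm_pos. Qed.
Lemma sqm_sq : sqrt (INR m) * sqrt (INR m) = INR m. Proof. apply sqrt_sqrt. pose proof INRm_pos; lra. Qed.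
Lemma K_pos : 0 < K. Proof. unfold K. pose proof INRm_pos. pose proof PI_RGT_0. apply Rdiv_lt_0_compat; [apply Rmult_lt_0_compat; [lra| apply pow_lt; lra] | apply Rmult_lt_0_compat; lra]. Qed.
Lemma c_pos : 0 < c. Proof. unfold c. pose proof sqm_pos. pose proof PI_RGT_0. apply Rdiv_lt_0_compat. nra. nra. Qed.
Lemma Kc : K * c = 2 * eps / sqrt (INR m).
Proof. unfold K, c. pose proof sqm_pos. pose proof PI_RGT_0. pose proof sqm_sq. set (s := sqrt (INR m)) in *. rewrite <- H1. field. lra. Qed.
Lemma Kc2 : K * c * c = Lf / (75 * PI).
Proof. unfold K, c. pose proof sqm_pos. pose proof PI_RGT_0. pose proof sqm_sq. set (s := sqrt (INR m)) in *. rewrite <- H1. field. lra. Qed.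

Lemma fi_eq i z : fi eps Lf m n i z = K * Hf (selo m i) (selD m n i) (vscal c z).
Proof. unfold fi. rewrite h_eq. reflexivity. Qed.

Definition gfi i z := vscal (K * c) (GH (selo m i) (selD m n i) (vscal c z)).

Definition Cq := K * c * c * (4 + 1200 * INR n).

Lemma fi_qb i x h : Rabs (fi eps Lf m n i (vadd x h) - fi eps Lf m n i x - dot n (gfi i x) h) <= Cq * dot n h h.
Proof. rewrite !fi_eq. unfold gfi. rewrite dot_scal_l, vscal_add.
 destruct (sel_cond m n i Ho) as [H1 H2].
 pose proof (H_qb (selo m i) (selD m n i) n (vscal c x) (vscal c h) ltac:(lia) H1).
 rewrite dot_scal_l, dot_scal_r in H.
 replace (K * Hf (selo m i) (selD m n i) (vadd (vscal c x) (vscal c h)) - K * Hf (selo m i) (selD m n i) (vscal c x) -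
   K * c * dot n (GH (selo m i) (selD m n i) (vscal c x)) h) with
   (K * (Hf (selo m i) (selD m n i) (vadd (vscal c x) (vscal c h)) - Hf (selo m i) (selD m n i) (vscal c x) -
   dot n (GH (selo m i) (selD m n i) (vscal c x)) (vscal c h))) by (rewrite dot_scal_r; ring).
 rewrite Rabs_mult, (Rabs_right K) by (pose proof K_pos; lra).
 pose proof K_pos. pose proof c_pos. pose proof (dot_sq_ge0 n h).
 assert (INR (selD m n i) <= INR n) by (apply le_INR; lia).
 unfold Cq. apply Rle_trans with (K * ((4 + 1200 * INR (selD m n i)) * (c * (c * dot n h h)))).
 apply Rmult_le_compat_l; [lra|]. rewrite dot_scal_r in H |- *. exact H.
 assert (0 <= K * c * c) by (apply Rmult_le_pos; [apply Rmult_le_pos|]; lra).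
 replace (K * ((4 + 1200 * INR (selD m n i)) * (c * (c * dot n h h)))) with ((K * c * c) * ((4 + 1200 * INR (selD m n i)) * dot n h h)) by ring.
 replace (K * c * c * (4 + 1200 * INR n) * dot n h h) with ((K * c * c) * ((4 + 1200 * INR n) * dot n h h)) by ring.
 apply Rmult_le_compat_l; auto. nra. Qed.

Lemma Cq_pos : 0 <= Cq.
Proof. unfold Cq. pose proof K_pos. pose proof c_pos. pose proof (pos_INR n).
 apply Rmult_le_pos. apply Rmult_le_pos; [apply Rmult_le_pos|]; lra. lra. Qed.

Lemma fi_glip i x y : dot n (vsub (gfi i x) (gfi i y)) (vsub (gfi i x) (gfi i y)) <= Lf ^ 2 * dot n (vsub x y) (vsub x y).
Proof. unfold gfi. rewrite vscal_sub, dot_scal_l, dot_scal_r.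
 destruct (sel_cond m n i Ho) as [H1 H2].
 pose proof (H_glip (selo m i) (selD m n i) n (vscal c x) (vscal c y) ltac:(lia) H1).
 rewrite vscal_sub, dot_scal_l, dot_scal_r in H.
 pose proof K_pos. pose proof c_pos. pose proof (dot_sq_ge0 n (vsub x y)).
 pose proof (dot_sq_ge0 n (vsub (GH (selo m i) (selD m n i) (vscal c x)) (GH (selo m i) (selD m n i) (vscal c y)))).
 apply Rle_trans with (K * c * (K * c) * (39200 * (c * (c * dot n (vsub x y) (vsub x y))))).
 rewrite <- Rmult_assoc. apply Rmult_le_compat_l; [nra|exact H].
 replace (K * c * (K * c) * (39200 * (c * (c * dot n (vsub x y) (vsub x y))))) with
   ((K * c * c) ^ 2 * 39200 * dot n (vsub x y) (vsub x y)) by ring.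
 rewrite Kc2. pose proof PI2_3_2. pose proof PI_RGT_0.
 apply Rmult_le_compat_r; auto.
 replace ((Lf / (75 * PI)) ^ 2 * 39200) with (Lf ^ 2 * (39200 / (5625 * PI ^ 2))) by (field; lra).
 rewrite <- (Rmult_1_r (Lf ^ 2)) at 2. apply Rmult_le_compat_l. nra.
 apply Rmult_le_reg_r with (5625 * PI ^ 2). nra. unfold Rdiv. rewrite Rmult_assoc, Rinv_l by nra. nra. Qed.

Lemma fi_lip i x y : Rabs (fi eps Lf m n i x - fi eps Lf m n i y) <= 50 * PI * eps * sqrt (INR n) / sqrt (INR m) * enorm n (vsub x y).
Proof. rewrite !fi_eq. destruct (sel_cond m n i Ho) as [H1 H2].
 pose proof (H_lip (selo m i) (selD m n i) n (vscal c x) (vscal c y) ltac:(lia) H1).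
 rewrite vscal_sub, enorm_scal in H. pose proof K_pos. pose proof c_pos.
 rewrite <- Rmult_minus_distr_l, Rabs_mult, (Rabs_right K) by lra. rewrite (Rabs_right c) in H by lra.
 pose proof (enorm_ge0 n (vsub x y)). pose proof PI2_3_2.
 assert (Hs : 2 <= sqrt (INR n)).
 { rewrite <- (sqrt_square 2) by lra. apply sqrt_le_1_alt. replace (2*2) with (INR 4) by (simpl; ring). apply le_INR; lia. }
 apply Rle_trans with (K * ((4 + 24 * PI * sqrt (INR n)) * (c * enorm n (vsub x y)))).
 apply Rmult_le_compat_l; lra.
 replace (K * ((4 + 24 * PI * sqrt (INR n)) * (c * enorm n (vsub x y)))) with
   ((K * c) * (4 + 24 * PI * sqrt (INR n)) * enorm n (vsub x y)) by ring.
 rewrite Kc. apply Rmult_le_compat_r; auto. pose proof sqm_pos.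
 replace (50 * PI * eps * sqrt (INR n) / sqrt (INR m)) with (2 * eps / sqrt (INR m) * (25 * PI * sqrt (INR n))) by (field; lra).
 apply Rmult_le_compat_l. apply Rlt_le, Rdiv_lt_0_compat; lra. nra. Qed.

Lemma fi_a i z : fi eps Lf m n i vzero - fi eps Lf m n i z <= 3000 * PI ^ 2 * INR n * eps ^ 2 / (INR m * Lf).
Proof. rewrite !fi_eq. rewrite <- Rmult_minus_distr_l.
 pose proof (H_a (selo m i) (selD m n i) (vscal c vzero) (vscal c z) ltac:(intros; unfold vscal, vzero; ring)).
 destruct (sel_cond m n i Ho) as [H1 H2].
 assert (INR (2 * selD m n i) <= INR n) by (apply le_INR; lia). rewrite mult_INR in H0. simpl (INR 2) in H0.
 pose proof K_pos. pose proof PI_RGT_0. assert (1 <= INR n) by (replace 1 with (INR 1) by auto; apply le_INR; lia).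
 apply Rle_trans with (K * (10 * PI * INR n)).
 apply Rmult_le_compat_l. lra. nra.
 unfold K. pose proof INRm_pos. right. field. nra. Qed.

End Fi.

Lemma block_eq n k u j : block n (S k) u j = u (k * n + j)%nat.
Proof. unfold block. f_equal. lia. Qed.

Lemma dot_block m n u w : dot (m * n) u w = rsum m (fun k => dot n (block n (S k) u) (block n (S k) w)).
Proof. unfold dot. rewrite rsum_mul. apply rsum_ext; intros k _. apply rsum_ext; intros j _. rewrite !block_eq. reflexivity. Qed.

Lemma divmod_kn n k j : (j < n)%nat -> ((k * n + j) / n = k)%nat /\ ((k * n + j) mod n = j)%nat.
Proof. intros Hj. assert (n <> 0%nat) by lia. split.
 rewrite Nat.div_add_l by auto. rewrite Nat.div_small by auto. lia.
 rewrite Nat.add_comm, Nat.Div0.mod_add. apply Nat.mod_small; auto. Qed.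

Definition G0 eps Lf m n (x : nat -> R) : nat -> R :=
  fun j => gfi eps Lf m n (S (j / n)) (block n (S (j / n)) x) (j mod n).

Lemma G0_block eps Lf m n x k j : (j < n)%nat ->
  block n (S k) (G0 eps Lf m n x) j = gfi eps Lf m n (S k) (block n (S k) x) j.
Proof. intros Hj. rewrite block_eq. unfold G0. destruct (divmod_kn n k j Hj) as [-> ->]. reflexivity. Qed.

Section F0.
Variables (eps Lf : R) (m n : nat).
Hypotheses (Heps : 0 < eps) (HLf : 0 < Lf) (Hm : (1 <= m)%nat) (Hn : (5 <= n)%nat) (Ho : Nat.Odd n).

Lemma f0_qb x h : Rabs (f0 eps Lf m n (vadd x h) - f0 eps Lf m n x - dot (m * n) (G0 eps Lf m n x) h)
   <= Cq eps Lf m n * dot (m * n) h h.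
Proof. unfold f0. rewrite dot_block, (dot_block m n h h).
 rewrite (rsum_ext m (fun k => dot n (block n (S k) (G0 eps Lf m n x)) (block n (S k) h))
    (fun k => dot n (gfi eps Lf m n (S k) (block n (S k) x)) (block n (S k) h))).
 2:{ intros k _. unfold dot. apply rsum_ext. intros j Hj. rewrite G0_block by auto. reflexivity. }
 rewrite <- !rsum_minus. eapply Rle_trans. apply rsum_abs. rewrite <- rsum_scal. apply rsum_le. intros k _.
 apply (fi_qb eps Lf m n Heps HLf Hm Hn Ho (S k) (block n (S k) x) (block n (S k) h)). Qed.

Lemma f0_glip x y : dot (m * n) (vsub (G0 eps Lf m n x) (G0 eps Lf m n y)) (vsub (G0 eps Lf m n x) (G0 eps Lf m n y))
  <= Lf ^ 2 * dot (m * n) (vsub x y) (vsub x y).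
Proof. rewrite !dot_block. rewrite <- rsum_scal. apply rsum_le. intros k _.
 eapply Rle_trans. 2: apply (fi_glip eps Lf m n Heps HLf Hm Hn Ho (S k) (block n (S k) x) (block n (S k) y)).
 right. unfold dot. apply rsum_ext. intros j Hj.
 transitivity ((block n (S k) (G0 eps Lf m n x) j - block n (S k) (G0 eps Lf m n y) j) *
   (block n (S k) (G0 eps Lf m n x) j - block n (S k) (G0 eps Lf m n y) j)). reflexivity.
 rewrite !G0_block by auto. reflexivity. Qed.

Lemma block_norm_le k v : (k < m)%nat -> enorm n (block n (S k) v) <= enorm (m * n) v.
Proof. intros Hk. unfold enorm. apply sqrt_le_1_alt. rewrite (dot_block m n v v).
 apply (rsum_single m k (fun k => dot n (block n (S k) v) (block n (S k) v))); auto. intros; apply dot_sq_ge0. Qed.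

Lemma f0_lip x y : Rabs (f0 eps Lf m n x - f0 eps Lf m n y) <= 50 * PI * eps * sqrt (INR m * INR n) * enorm (m * n) (vsub x y).
Proof. unfold f0. rewrite <- rsum_minus. eapply Rle_trans. apply rsum_abs.
 set (L := 50 * PI * eps * sqrt (INR n) / sqrt (INR m)).
 apply Rle_trans with (rsum m (fun _ => L * enorm (m * n) (vsub x y))).
 { apply rsum_le. intros k Hk. eapply Rle_trans. apply (fi_lip eps Lf m n Heps HLf Hm Hn Ho).
   apply Rmult_le_compat_l. unfold L. pose proof PI_RGT_0. pose proof (sqrt_pos (INR n)).
   pose proof (sqm_pos m n Hm Hn). unfold Rdiv. apply Rmult_le_pos. apply Rmult_le_pos; [|lra]. apply Rmult_le_pos; [|lra]. apply Rmult_le_pos; lra. apply Rlt_le, Rinv_0_lt_compat. lra.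
   apply (block_norm_le k (vsub x y) Hk). }
 rewrite rsum_const. rewrite <- Rmult_assoc. apply Rmult_le_compat_r. apply enorm_ge0.
 unfold L. pose proof (sqm_pos m n Hm Hn). pose proof (sqm_sq m n Hm Hn). rewrite sqrt_mult_alt by apply pos_INR.
 right. set (s := sqrt (INR m)) in *. rewrite <- H0. field. lra. Qed.

Lemma f0_a x : f0 eps Lf m n vzero - f0 eps Lf m n x <= 3000 * PI ^ 2 * INR n * eps ^ 2 / Lf.
Proof. unfold f0. rewrite <- rsum_minus.
 apply Rle_trans with (rsum m (fun _ => 3000 * PI ^ 2 * INR n * eps ^ 2 / (INR m * Lf))).
 { apply rsum_le. intros k Hk. apply (fi_a eps Lf m n Heps HLf Hm Hn Ho (S k) (block n (S k) x)). }
 rewrite rsum_const. right. pose proof (INRm_pos m n Hm Hn). field. lra. Qed.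

End F0.

Theorem lemma2 (eps Lf : R) (m1 m2 dbar : nat) :
  0 < eps < 1 -> 0 < Lf ->
  (2 <= m1)%nat -> (1 <= m2)%nat -> Nat.Even (m1 * m2) ->
  Nat.Odd dbar -> (5 <= dbar)%nat ->
  let m := (3 * m1 * m2)%nat in
  let d := (m * dbar)%nat in
  (* (a) *)
  ((forall i : nat, (1 <= i <= m)%nat -> forall z : nat -> R,
      fi eps Lf m dbar i vzero - fi eps Lf m dbar i z
        <= 3000 * PI ^ 2 * INR dbar * eps ^ 2 / (INR m * Lf)) /\
   (forall x : nat -> R,
      f0 eps Lf m dbar vzero - f0 eps Lf m dbar x
        <= 3000 * PI ^ 2 * INR dbar * eps ^ 2 / Lf)) /\
  (* (b) *)
  ((forall i : nat, (1 <= i <= m)%nat -> grad_lipschitz dbar Lf (fi eps Lf m dbar i)) /\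
   grad_lipschitz d Lf (f0 eps Lf m dbar)) /\
  (* (c) *)
  ((forall i : nat, (1 <= i <= m)%nat ->
      lipschitz dbar (50 * PI * eps * sqrt (INR dbar) / sqrt (INR m)) (fi eps Lf m dbar i)) /\
   lipschitz d (50 * PI * eps * sqrt (INR m * INR dbar)) (f0 eps Lf m dbar)).
Proof.
 intros Heps HLf Hm1 Hm2 Hev Hodd Hd m d.
 assert (Hm : (1 <= m)%nat) by (unfold m; lia).
 assert (He : 0 < eps) by lra.
 split; [split|split; [split|split]].
 - intros i Hi z. eapply fi_a; eauto.
 - intros x. eapply f0_a; eauto.
 - intros i Hi. exists (gfi eps Lf m dbar i). split.
   + apply qb_grad with (Cq eps Lf m dbar). eapply Cq_pos; eauto. intros; eapply fi_qb; eauto.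
   + intros x y. apply enorm_le_of_sq. lra. eapply fi_glip; eauto.
 - exists (G0 eps Lf m dbar). split.
   + apply qb_grad with (Cq eps Lf m dbar). eapply Cq_pos; eauto. intros; eapply f0_qb; eauto.
   + intros x y. apply enorm_le_of_sq. lra. eapply f0_glip; eauto.
 - intros i Hi x y. eapply fi_lip; eauto.
 - intros x y. eapply f0_lip; eauto.
Qed.
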